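(* Let $S\subset\mathbb{Z}^d$ be a finite set containing the origin, $\mathcal{P}=\{P_\alpha\}_{\alpha\in S}$ a resolution of unity on $\mathbb{C}^D$ with $\operatorname{rank}P_0=1$, $\mu\in\mathbb{C}^D$ a unit vector and $C_\mu\phi=2\langle\phi,\mu\rangle\mu-\phi$. If $P_0\mu\neq0$, then $U(S,\mathcal{P},C_\mu)$ does not have the eigenvalue $-1$.
   Context: A resolution of unity: orthogonal projections $P_\alpha$ on $\mathbb{C}^D$, $P_\alpha P_\beta=0$ ($\alpha\neq\beta$), $\sum_\alpha P_\alpha=I$. $(\tau^\alpha f)(x)=f(x-\alpha)$ on $\ell^2(\mathbb{Z}^d,\mathbb{C}^D)$, $U(S,\mathcal{P},C)=\big(\sum_{\alpha\in S}\tau^\alpha P_\alpha\big)C$ with $C$ acting pointwise; eigenvalue means point spectrum. Inner products are linear in the first argument. *)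

(* Defs.v *)
From Stdlib Require Import Reals List ZArith.
Open Scope R_scope.

Record Cpx := mkC { Re : R; Im : R }.
Definition Czero : Cpx := mkC 0 0.
Definition Cone : Cpx := mkC 1 0.
Definition Cadd (z w : Cpx) : Cpx := mkC (Re z + Re w) (Im z + Im w).
Definition Copp (z : Cpx) : Cpx := mkC (- Re z) (- Im z).
Definition Cmul (z w : Cpx) : Cpx :=
  mkC (Re z * Re w - Im z * Im w) (Re z * Im w + Im z * Re w).
Definition Cconj (z : Cpx) : Cpx := mkC (Re z) (- Im z).
Definition RtoC (r : R) : Cpx := mkC r 0.
Definition Cnorm2 (z : Cpx) : R := Re z * Re z + Im z * Im z.

Fixpoint Csum (n : nat) (f : nat -> Cpx) : Cpx :=
  match n with O => Czero | S n' => Cadd (Csum n' f) (f n') end.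
Fixpoint Rsum (n : nat) (f : nat -> R) : R :=
  match n with O => 0 | S n' => Rsum n' f + f n' end.

(** * C^D: vectors are nat -> Cpx, only indices i < D matter;
      D x D matrices are nat -> nat -> Cpx, only indices < D matter. *)
Definition vec := nat -> Cpx.
Definition mat := nat -> nat -> Cpx.

Definition vec_eq (D : nat) (u v : vec) : Prop := forall i, (i < D)%nat -> u i = v i.
Definition vec_nonzero (D : nat) (u : vec) : Prop := exists i, (i < D)%nat /\ u i <> Czero.
Definition mat_eq (D : nat) (A B : mat) : Prop :=
  forall i j, (i < D)%nat -> (j < D)%nat -> A i j = B i j.

Definition mat_app (D : nat) (A : mat) (v : vec) : vec :=
  fun i => Csum D (fun j => Cmul (A i j) (v j)).
Definition mat_mul (D : nat) (A B : mat) : mat :=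
  fun i k => Csum D (fun j => Cmul (A i j) (B j k)).
Definition mat_adj (A : mat) : mat := fun i j => Cconj (A j i).
Definition mat_add (A B : mat) : mat := fun i j => Cadd (A i j) (B i j).
Definition mat0 : mat := fun _ _ => Czero.
Definition mat1 : mat := fun i j => if Nat.eqb i j then Cone else Czero.

(** inner product, linear in the first argument *)
Definition inner (D : nat) (u v : vec) : Cpx := Csum D (fun i => Cmul (u i) (Cconj (v i))).
Definition vnorm2 (D : nat) (u : vec) : R := Rsum D (fun i => Cnorm2 (u i)).

Definition orth_proj (D : nat) (P : mat) : Prop :=
  mat_eq D (mat_mul D P P) P /\ mat_eq D (mat_adj P) P.

Definition rank_one (D : nat) (A : mat) : Prop :=
  exists v : vec, vec_nonzero D v /\
    (forall w, exists c : Cpx, vec_eq D (mat_app D A w) (fun i => Cmul c (v i))) /\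
    (exists w, vec_eq D (mat_app D A w) v).

(** * Z^d: points are lists of integers of length d *)
Definition pt := list Z.
Fixpoint psub (x a : pt) : pt :=
  match x, a with
  | x0 :: x', a0 :: a' => (x0 - a0)%Z :: psub x' a'
  | _, _ => nil
  end.
Definition origin (d : nat) : pt := repeat 0%Z d.

Definition mat_sum_list (S : list pt) (P : pt -> mat) : mat :=
  fold_right (fun a acc => mat_add (P a) acc) mat0 S.

Definition resolution_of_unity (D : nat) (S : list pt) (P : pt -> mat) : Prop :=
  NoDup S /\
  (forall a, In a S -> orth_proj D (P a)) /\
  (forall a b, In a S -> In b S -> a <> b -> mat_eq D (mat_mul D (P a) (P b)) mat0) /\
  mat_eq D (mat_sum_list S P) mat1.

Definition field := pt -> vec.

Definition in_l2 (d D : nat) (f : field) : Prop :=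
  exists M : R, forall L : list pt, NoDup L -> (forall x, In x L -> length x = d) ->
    fold_right (fun x acc => vnorm2 D (f x) + acc) 0 L <= M.

Definition coin_mu (D : nat) (mu : vec) (phi : vec) : vec :=
  fun i => Cadd (Cmul (Cmul (RtoC 2) (inner D phi mu)) (mu i)) (Copp (phi i)).

Definition walk (D : nat) (S : list pt) (P : pt -> mat) (Cop : vec -> vec) (f : field) : field :=
  fun x => fold_right (fun a acc => fun i => Cadd (mat_app D (P a) (Cop (f (psub x a))) i) (acc i))
                      (fun _ => Czero) S.

Definition is_eigenvalue (d D : nat) (T : field -> field) (lam : Cpx) : Prop :=
  exists f : field, in_l2 d D f /\
    (exists x, length x = d /\ vec_nonzero D (f x)) /\
    (forall x, length x = d -> vec_eq D (T f x) (fun i => Cmul lam (f x i))).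

(* Main.v *)
Require Import Defs.
From Stdlib Require Import Reals List ZArith Lra Lia Psatz Arith Classical.
Open Scope R_scope.

Lemma Ceq (z w : Cpx) : Re z = Re w -> Im z = Im w -> z = w.
Proof. destruct z, w; simpl; intros; subst; reflexivity. Qed.

Ltac csimpl := repeat match goal with z : Cpx |- _ => destruct z end;
  unfold Cadd, Cmul, Copp, Cconj, Czero, Cone, RtoC, Cnorm2 in *; simpl in *.

Lemma Cring : ring_theory Czero Cone Cadd Cmul (fun a b => Cadd a (Copp b)) Copp (@eq Cpx).
Proof. constructor; intros; apply Ceq; csimpl; ring. Qed.
Add Ring Cring : Cring.

Lemma Cmul_eq0 z w : Cmul z w = Czero -> w <> Czero -> z = Czero.
Proof.
  destruct z as [a b], w as [c e]; unfold Cmul, Czero; simpl; intros H Hw.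
  injection H; intros H1 H2.
  assert (Hp : c*c + e*e > 0).
  { destruct (Req_dec c 0); destruct (Req_dec e 0); subst.
    - exfalso; apply Hw; reflexivity.
    - nra. - nra. - nra. }
  assert (a * (c*c+e*e) = 0).
  { replace (a * (c*c+e*e)) with (c*(a*c - b*e) + e*(a*e+b*c)) by ring. rewrite H1, H2; ring. }
  assert (b * (c*c+e*e) = 0).
  { replace (b * (c*c+e*e)) with (c*(a*e + b*c) - e*(a*c-b*e)) by ring. rewrite H1, H2; ring. }
  assert (a = 0) by nra. assert (b = 0) by nra. subst; reflexivity.
Qed.

Lemma Cconj_mul z w : Cconj (Cmul z w) = Cmul (Cconj z) (Cconj w).
Proof. apply Ceq; csimpl; ring. Qed.
Lemma Cconj_add z w : Cconj (Cadd z w) = Cadd (Cconj z) (Cconj w).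
Proof. apply Ceq; csimpl; ring. Qed.
Lemma Cconj_inv z : Cconj (Cconj z) = z.
Proof. apply Ceq; csimpl; ring. Qed.
Lemma Cconj_zero : Cconj Czero = Czero.
Proof. apply Ceq; csimpl; ring. Qed.
Lemma Cconj_eq0 z : Cconj z = Czero -> z = Czero.
Proof. intros H. rewrite <- (Cconj_inv z), H. apply Cconj_zero. Qed.

Lemma Cnorm2_pos z : z <> Czero -> 0 < Cnorm2 z.
Proof.
  destruct z as [a b]; unfold Cnorm2, Czero; simpl; intros Hz.
  destruct (Req_dec a 0); destruct (Req_dec b 0); subst.
  - exfalso; apply Hz; reflexivity.
  - nra. - nra. - nra.
Qed.
Lemma Cnorm2_nonneg z : 0 <= Cnorm2 z.
Proof. destruct z; unfold Cnorm2; simpl; nra. Qed.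

Lemma Csum_ext n f g : (forall i, (i<n)%nat -> f i = g i) -> Csum n f = Csum n g.
Proof. induction n; simpl; intros H; auto. rewrite IHn by (intros; apply H; lia). rewrite H by lia. auto. Qed.
Lemma Csum_add n f g : Csum n (fun i => Cadd (f i) (g i)) = Cadd (Csum n f) (Csum n g).
Proof. induction n; simpl. apply Ceq; csimpl; ring. rewrite IHn; ring. Qed.
Lemma Csum_mul_l n c f : Csum n (fun i => Cmul c (f i)) = Cmul c (Csum n f).
Proof. induction n; simpl. apply Ceq; csimpl; ring. rewrite IHn; ring. Qed.
Lemma Csum_opp n f : Csum n (fun i => Copp (f i)) = Copp (Csum n f).
Proof. induction n; simpl. apply Ceq; csimpl; ring. rewrite IHn; ring. Qed.
Lemma Csum_zero n f : (forall i, (i<n)%nat -> f i = Czero) -> Csum n f = Czero.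
Proof. induction n; simpl; intros H; auto. rewrite IHn by (intros; apply H; lia). rewrite H by lia. ring. Qed.
Lemma Csum_swap n m g : Csum n (fun i => Csum m (fun j => g i j)) = Csum m (fun j => Csum n (fun i => g i j)).
Proof.
  induction n; simpl. symmetry; apply Csum_zero; auto.
  rewrite IHn, <- Csum_add. auto.
Qed.
Lemma Csum_conj n f : Cconj (Csum n f) = Csum n (fun i => Cconj (f i)).
Proof. induction n; simpl. apply Cconj_zero. rewrite Cconj_add, IHn; auto. Qed.
Lemma Csum_delta n k g : (k<n)%nat -> Csum n (fun j => if Nat.eqb k j then g j else Czero) = g k.
Proof.
  induction n; intros Hk; [lia|]. simpl.
  destruct (Nat.eqb_spec k n).
  - subst. rewrite Csum_zero. ring. intros i Hi. destruct (Nat.eqb_spec n i); [lia|auto].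
  - rewrite IHn by lia. ring.
Qed.

Lemma Rsum_nonneg n f : (forall i, (i<n)%nat -> 0 <= f i) -> 0 <= Rsum n f.
Proof. induction n; simpl; intros H. lra. assert (0 <= Rsum n f) by (apply IHn; intros; apply H; lia). specialize (H n ltac:(lia)). lra. Qed.
Lemma Rsum_pos n f k : (forall i, (i<n)%nat -> 0 <= f i) -> (k < n)%nat -> 0 < f k -> 0 < Rsum n f.
Proof.
  induction n; simpl; intros H Hk Hf; [lia|].
  destruct (Nat.eq_dec k n).
  - subst. assert (0 <= Rsum n f) by (apply Rsum_nonneg; intros; apply H; lia). lra.
  - assert (0 < Rsum n f) by (apply IHn; auto; lia). specialize (H n ltac:(lia)). lra.
Qed.
Lemma Rsum_ext n f g : (forall i, (i<n)%nat -> f i = g i) -> Rsum n f = Rsum n g.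
Proof. induction n; simpl; intros H; auto. rewrite IHn by (intros; apply H; lia). rewrite H by lia. auto. Qed.

Lemma vnorm2_nonneg D u : 0 <= vnorm2 D u.
Proof. apply Rsum_nonneg; intros; apply Cnorm2_nonneg. Qed.
Lemma vnorm2_pos D u : vec_nonzero D u -> 0 < vnorm2 D u.
Proof. intros [i [Hi Hu]]. apply (Rsum_pos _ _ i); auto. intros; apply Cnorm2_nonneg. apply Cnorm2_pos; auto. Qed.
Lemma vnorm2_ext D u v : vec_eq D u v -> vnorm2 D u = vnorm2 D v.
Proof. intros H; apply Rsum_ext; intros; rewrite H; auto. Qed.

Lemma mat_app_ext D A B u v i : (forall j, (j<D)%nat -> A i j = B i j) -> vec_eq D u v ->
  mat_app D A u i = mat_app D B v i.
Proof. intros H1 H2; apply Csum_ext; intros; rewrite H1, H2; auto. Qed.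
Lemma mat_app_extm D A B u v : mat_eq D A B -> vec_eq D u v -> vec_eq D (mat_app D A u) (mat_app D B v).
Proof. intros H1 H2 i Hi; apply mat_app_ext; auto. Qed.
Lemma mat_app_sub D A u w i :
  mat_app D A (fun j => Cadd (u j) (Copp (w j))) i = Cadd (mat_app D A u i) (Copp (mat_app D A w i)).
Proof. unfold mat_app. rewrite <- Csum_opp, <- Csum_add. apply Csum_ext; intros; ring. Qed.
Lemma mat_app_scale D A c u i : mat_app D A (fun j => Cmul c (u j)) i = Cmul c (mat_app D A u i).
Proof. unfold mat_app. rewrite <- Csum_mul_l. apply Csum_ext; intros; ring. Qed.
Lemma mat_app_mul D A B u i : mat_app D A (mat_app D B u) i = mat_app D (mat_mul D A B) u i.
Proof.
  unfold mat_app, mat_mul.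
  rewrite (Csum_ext _ _ (fun j => Csum D (fun k => Cmul (A i j) (Cmul (B j k) (u k))))).
  2:{ intros; rewrite <- Csum_mul_l; auto. }
  rewrite Csum_swap. apply Csum_ext; intros k _.
  rewrite Cring.(Rmul_comm), <- Csum_mul_l. apply Csum_ext; intros; ring.
Qed.
Lemma mat_app_mat0 D u i : mat_app D mat0 u i = Czero.
Proof. apply Csum_zero; intros; unfold mat0; ring. Qed.
Lemma mat_app_madd D A B u i : mat_app D (mat_add A B) u i = Cadd (mat_app D A u i) (mat_app D B u i).
Proof. unfold mat_app, mat_add. rewrite <- Csum_add. apply Csum_ext; intros; ring. Qed.
Lemma mat_app_mat1 D u i : (i < D)%nat -> mat_app D mat1 u i = u i.
Proof.
  intros Hi. unfold mat_app, mat1.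
  rewrite (Csum_ext _ _ (fun j => if Nat.eqb i j then u j else Czero)).
  apply Csum_delta; auto. intros j _; destruct (Nat.eqb i j); ring.
Qed.
Lemma mat_app_coin D A mu u i :
  mat_app D A (coin_mu D mu u) i =
  Cadd (Cmul (Cmul (RtoC 2) (inner D u mu)) (mat_app D A mu i)) (Copp (mat_app D A u i)).
Proof.
  unfold mat_app, coin_mu. rewrite <- Csum_opp, <- Csum_mul_l, <- Csum_add.
  apply Csum_ext; intros; ring.
Qed.

Lemma inner_ext D u u' w w' : vec_eq D u u' -> vec_eq D w w' -> inner D u w = inner D u' w'.
Proof. intros H1 H2; apply Csum_ext; intros; rewrite H1, H2; auto. Qed.
Lemma inner_adj D A u w : inner D (mat_app D A u) w = inner D u (mat_app D (mat_adj A) w).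
Proof.
  unfold inner, mat_app, mat_adj.
  rewrite (Csum_ext _ _ (fun i => Csum D (fun j => Cmul (Cmul (A i j) (u j)) (Cconj (w i))))).
  2:{ intros. rewrite Cring.(Rmul_comm), <- Csum_mul_l. apply Csum_ext; intros; ring. }
  rewrite Csum_swap. apply Csum_ext; intros j _.
  rewrite Csum_conj, <- Csum_mul_l. apply Csum_ext; intros. rewrite Cconj_mul, Cconj_inv; ring.
Qed.
Lemma inner_add_l D u w z : inner D (fun i => Cadd (u i) (w i)) z = Cadd (inner D u z) (inner D w z).
Proof. unfold inner. rewrite <- Csum_add. apply Csum_ext; intros; ring. Qed.
Lemma inner_add_r D u w z : inner D z (fun i => Cadd (u i) (w i)) = Cadd (inner D z u) (inner D z w).
Proof. unfold inner. rewrite <- Csum_add. apply Csum_ext; intros; rewrite Cconj_add; ring. Qed.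
Lemma inner_conj D u w : Cconj (inner D u w) = inner D w u.
Proof. unfold inner. rewrite Csum_conj. apply Csum_ext; intros; rewrite Cconj_mul, Cconj_inv; ring. Qed.
Lemma inner_self D v : inner D v v = RtoC (vnorm2 D v).
Proof.
  unfold inner, vnorm2. induction D; simpl. reflexivity.
  rewrite IHD. apply Ceq; unfold Cadd, Cmul, Cconj, RtoC, Cnorm2; simpl; ring.
Qed.
Lemma inner_scale D a b u w :
  inner D (fun i => Cmul a (u i)) (fun i => Cmul b (w i)) = Cmul (Cmul a (Cconj b)) (inner D u w).
Proof. unfold inner. rewrite <- Csum_mul_l. apply Csum_ext; intros; rewrite Cconj_mul; ring. Qed.
Lemma inner_zero_r D u : inner D u (fun _ => Czero) = Czero.
Proof. apply Csum_zero; intros; rewrite Cconj_zero; ring. Qed.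

Lemma proj_norm D P u : orth_proj D P -> vnorm2 D (mat_app D P u) <= vnorm2 D u.
Proof.
  intros [HPP HPa].
  set (p := mat_app D P u).
  set (q := fun i => Cadd (u i) (Copp (p i))).
  assert (Hpq : inner D p q = Czero).
  { unfold p. rewrite inner_adj.
    rewrite (inner_ext D u u _ (fun _ => Czero)). apply inner_zero_r.
    intros i Hi; auto.
    intros i Hi. rewrite (mat_app_ext D (mat_adj P) P q q) by (auto; intros; intros k Hk; auto).
    unfold q. rewrite mat_app_sub. unfold p. rewrite mat_app_mul.
    rewrite (mat_app_ext D (mat_mul D P P) P u u) by (auto; intros; intros k Hk; auto). ring. }
  assert (Hqp : inner D q p = Czero) by (rewrite <- inner_conj, Hpq; apply Cconj_zero).
  assert (Hu : inner D u u = inner D (fun i => Cadd (p i) (q i)) (fun i => Cadd (p i) (q i))).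
  { apply inner_ext; intros i Hi; unfold q; ring. }
  rewrite inner_add_l, !inner_add_r, Hpq, Hqp, !inner_self in Hu.
  assert (H := f_equal Re Hu). simpl in H.
  pose proof (vnorm2_nonneg D q). lra.
Qed.

Lemma psub_length x a : length (psub x a) = Nat.min (length x) (length a).
Proof. revert a; induction x as [|x0 x IHx]; intros a; destruct a; simpl; auto. Qed.
Lemma psub_origin x : psub x (origin (length x)) = x.
Proof. unfold origin. induction x; simpl; auto. rewrite IHx. f_equal. lia. Qed.
Lemma nth_psub x a k : (k < length x)%nat -> (k < length a)%nat ->
  nth k (psub x a) 0%Z = (nth k x 0 - nth k a 0)%Z.
Proof.
  revert a k; induction x as [|x0 x IHx]; intros a k H1 H2; destruct a as [|a0 a]; simpl in *; try lia.
  destruct k; simpl; auto. apply IHx; lia.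
Qed.
Lemma all_zero_origin b : (forall k, (k < length b)%nat -> nth k b 0%Z = 0%Z) -> b = origin (length b).
Proof.
  unfold origin; induction b; simpl; intros H; auto.
  f_equal. apply (H 0%nat); lia. apply IHb. intros k Hk. apply (H (S k)); lia.
Qed.

Lemma fold_app D A (L : list pt) (u : pt -> vec) i :
  mat_app D A (fold_right (fun a acc => fun i => Cadd (u a i) (acc i)) (fun _ => Czero) L) i
  = fold_right (fun a acc => Cadd (mat_app D A (u a) i) acc) Czero L.
Proof.
  induction L; simpl.
  - apply Csum_zero; intros; ring.
  - rewrite <- IHL. unfold mat_app. rewrite <- Csum_add. apply Csum_ext; intros; ring.
Qed.
Lemma fold_msum D (L : list pt) P u i :
  mat_app D (mat_sum_list L P) u i = fold_right (fun a acc => Cadd (mat_app D (P a) u i) acc) Czero L.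
Proof.
  induction L; simpl. apply mat_app_mat0. rewrite mat_app_madd, IHL; auto.
Qed.
Lemma fold_zero (L : list pt) (g : pt -> Cpx) : (forall a, In a L -> g a = Czero) ->
  fold_right (fun a acc => Cadd (g a) acc) Czero L = Czero.
Proof. induction L; simpl; intros H; auto. rewrite H, IHL by auto. ring. Qed.
Lemma fold_select (L : list pt) (g : pt -> Cpx) b : NoDup L -> In b L ->
  (forall a, In a L -> a <> b -> g a = Czero) ->
  fold_right (fun a acc => Cadd (g a) acc) Czero L = g b.
Proof.
  induction L as [|a L IH]; simpl; intros HN Hb H; [contradiction|].
  inversion HN; subst.
  destruct Hb as [<- | Hb].
  - rewrite fold_zero. ring. intros a' Ha'. apply H; auto. intros ->; contradiction.
  - rewrite IH; auto. rewrite H; auto. ring. intros ->; contradiction.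
Qed.

Lemma fold_lower (f : pt -> R) (L : list pt) eps : (forall x, In x L -> eps <= f x) ->
  INR (length L) * eps <= fold_right (fun x acc => f x + acc) 0 L.
Proof.
  induction L; cbn [length fold_right]; intros H. simpl; lra.
  assert (eps <= f a) by (apply H; simpl; auto). assert (INR (length L) * eps <= fold_right (fun x acc => f x + acc) 0 L) by (apply IHL; intros; apply H; simpl; auto).
  rewrite S_INR; lra.
Qed.

Theorem theorem3p4 (d D : nat) (S : list pt) (P : pt -> mat) (mu : vec) :
  (forall a, In a S -> length a = d) ->
  In (origin d) S ->
  resolution_of_unity D S P ->
  rank_one D (P (origin d)) ->
  vnorm2 D mu = 1 ->
  vec_nonzero D (mat_app D (P (origin d)) mu) ->
  ~ is_eigenvalue d D (walk D S P (coin_mu D mu)) (Copp Cone).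
Proof.
  intros Hlen Hin0 [HND [Horth [Hperp Hsum]]] [v [Hvnz [Hv1 _]]] Hmu Hnz
    [f [Hl2 [[x0 [Hx0 Hfx0]] Heig]]].
  assert (HE : forall b, In b S -> forall x, length x = d -> forall i, (i < D)%nat ->
    Cadd (Cmul (Cmul (RtoC 2) (inner D (f (psub x b)) mu)) (mat_app D (P b) mu i))
         (Copp (mat_app D (P b) (f (psub x b)) i)) = Copp (mat_app D (P b) (f x) i)).
  { intros b Hb x Hx i Hi.
    assert (H1 := mat_app_ext D (P b) (P b) _ _ i (fun _ _ => eq_refl) (Heig x Hx)).
    rewrite mat_app_scale in H1. unfold walk in H1. rewrite fold_app in H1.
    rewrite (fold_select _ _ b) in H1; auto.
    - rewrite mat_app_mul in H1.
      rewrite (mat_app_ext D _ (P b) _ (coin_mu D mu (f (psub x b)))) in H1;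
        [| intros j Hj; apply (proj1 (Horth b Hb)); auto | intros j Hj; auto].
      rewrite mat_app_coin in H1. rewrite H1. ring.
    - intros a Ha Hab. rewrite mat_app_mul.
      rewrite (mat_app_ext D _ mat0 _ (coin_mu D mu (f (psub x a)))).
      apply mat_app_mat0. intros j Hj; apply Hperp; auto. intros j Hj; auto. }
  assert (Hc : forall x, length x = d -> inner D (f x) mu = Czero).
  { intros x Hx. destruct Hnz as [i0 [Hi0 Hz]].
    specialize (HE _ Hin0 x Hx i0 Hi0).
    rewrite <- Hx, psub_origin in HE. rewrite Hx in HE.
    set (k := inner D (f x) mu) in *.
    set (z := mat_app D (P (origin d)) mu i0) in *.
    set (w := mat_app D (P (origin d)) (f x) i0) in *.
    assert (Cmul (Cmul (RtoC 2) k) z = Czero).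
    { replace (Cmul (Cmul (RtoC 2) k) z) with (Cadd (Cadd (Cmul (Cmul (RtoC 2) k) z) (Copp w)) w) by ring.
      rewrite HE; ring. }
    apply Cmul_eq0 in H; auto.
    apply (Cmul_eq0 k (RtoC 2)). rewrite <- H; ring.
    intros H2. injection H2; lra. }
  assert (Hper : forall b, In b S -> forall x, length x = d ->
      vec_eq D (mat_app D (P b) (f (psub x b))) (mat_app D (P b) (f x))).
  { intros b Hb x Hx i Hi. specialize (HE b Hb x Hx i Hi).
    rewrite Hc in HE. 2:{ rewrite psub_length, Hx, (Hlen b Hb); lia. }
    set (u1 := mat_app D (P b) (f (psub x b)) i) in *.
    set (u2 := mat_app D (P b) (f x) i) in *.
    replace u1 with (Cadd (Copp (Cadd (Cmul (Cmul (RtoC 2) Czero) (mat_app D (P b) mu i)) (Copp u1)))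
      (Cmul (Cmul (RtoC 2) Czero) (mat_app D (P b) mu i))) by ring.
    rewrite HE; ring. }
  assert (Hzero : forall b, In b S -> b <> origin d -> forall y, length y = d ->
      vec_eq D (mat_app D (P b) (f y)) (fun _ => Czero)).
  { intros b Hb Hb0 y Hy i Hi.
    destruct (classic (mat_app D (P b) (f y) i = Czero)) as [E|E]; auto. exfalso.
    set (w := mat_app D (P b) (f y)).
    assert (Heps : 0 < vnorm2 D w) by (apply vnorm2_pos; exists i; auto).
    set (yn := fun n : nat => Nat.iter n (fun z => psub z b) y).
    assert (Hyl : forall n, length (yn n) = d).
    { induction n; simpl; auto. unfold yn in *; simpl. rewrite psub_length, IHn, (Hlen b Hb); lia. }
    assert (Hyw : forall n, vec_eq D (mat_app D (P b) (f (yn n))) w).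
    { induction n; intros j Hj; simpl. auto. unfold yn in *; simpl.
      rewrite (Hper b Hb _ (Hyl n) j Hj). apply IHn; auto. }
    assert (Hbk : exists k, (k < d)%nat /\ nth k b 0%Z <> 0%Z).
    { apply NNPP; intros Hn. apply Hb0. rewrite <- (Hlen b Hb). apply all_zero_origin.
      intros k Hk. apply NNPP; intros Hk2. apply Hn. exists k; split; auto.
      rewrite <- (Hlen b Hb); auto. }
    destruct Hbk as [k [Hk Hbk]].
    assert (Hnth : forall n, nth k (yn n) 0%Z = (nth k y 0 - Z.of_nat n * nth k b 0)%Z).
    { induction n. simpl; lia. unfold yn in *; cbn [Nat.iter]. change (nth k (psub (Nat.iter n (fun z => psub z b) y) b) 0%Z = (nth k y 0 - Z.of_nat (Datatypes.S n) * nth k b 0)%Z). rewrite nth_psub, IHn. lia.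
      rewrite (Hyl n); auto. rewrite (Hlen b Hb); auto. }
    assert (Hinj : forall n m, yn n = yn m -> n = m).
    { intros n m Hnm. assert (H := f_equal (fun l => nth k l 0%Z) Hnm). simpl in H.
      rewrite !Hnth in H.
      assert (Z.of_nat n * nth k b 0 = Z.of_nat m * nth k b 0)%Z by lia.
      apply Z.mul_reg_r in H0; auto. lia. }
    destruct Hl2 as [M HM].
    destruct (INR_unbounded (M / vnorm2 D w)) as [N HN].
    specialize (HM (map yn (seq 0 N))).
    assert (HN2 : INR N * vnorm2 D w > M).
    { apply (Rmult_lt_compat_r (vnorm2 D w)) in HN; auto.
      unfold Rdiv in HN. rewrite Rmult_assoc, Rinv_l in HN; lra. }
    assert (Hlow := fold_lower (fun x => vnorm2 D (f x)) (map yn (seq 0 N)) (vnorm2 D w)).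
    rewrite length_map, length_seq in Hlow.
    assert (fold_right (fun x acc => vnorm2 D (f x) + acc) 0 (map yn (seq 0 N)) <= M).
    { apply HM. apply NoDup_map_NoDup_ForallPairs. intros n m _ _; apply Hinj. apply seq_NoDup.
      intros x Hx'. apply in_map_iff in Hx'. destruct Hx' as [n [<- _]]. auto. }
    assert (INR N * vnorm2 D w <= fold_right (fun x acc => vnorm2 D (f x) + acc) 0 (map yn (seq 0 N))).
    { apply Hlow. intros x Hx'. apply in_map_iff in Hx'. destruct Hx' as [n [<- _]].
      rewrite <- (vnorm2_ext D _ _ (Hyw n)). apply proj_norm; auto. }
    lra. }
  assert (Hfin : forall y, length y = d -> vec_eq D (f y) (mat_app D (P (origin d)) (f y))).
  { intros y Hy i Hi. rewrite <- (mat_app_mat1 D (f y) i Hi).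
    rewrite (mat_app_ext D mat1 (mat_sum_list S P) (f y) (f y)).
    2:{ intros j Hj; symmetry; apply Hsum; auto. } 2:{ intros j Hj; auto. }
    rewrite fold_msum. apply (fold_select _ (fun a => mat_app D (P a) (f y) i)); auto.
    intros a Ha Ha0. apply Hzero; auto. }
  destruct Hfx0 as [i0 [Hi0 Hf0]].
  destruct (Hv1 (f x0)) as [c1 Hc1].
  destruct (Hv1 mu) as [c2 Hc2].
  assert (Hc2nz : c2 <> Czero).
  { intros ->. destruct Hnz as [j [Hj Hz]]. apply Hz. rewrite Hc2 by auto. ring. }
  assert (Hvpos : 0 < vnorm2 D v) by (apply vnorm2_pos; auto).
  assert (H0 := Hc x0 Hx0).
  rewrite (inner_ext D (f x0) (mat_app D (P (origin d)) (f x0)) mu mu) in H0 by first [intros ? ?; reflexivity | apply Hfin; auto].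
  rewrite inner_adj in H0.
  rewrite (inner_ext D (f x0) (mat_app D (P (origin d)) (f x0)) _ (mat_app D (P (origin d)) mu)) in H0.
  2:{ apply Hfin; auto. }
  2:{ apply mat_app_extm. intros a b Ha Hb; apply (proj2 (Horth _ Hin0)); auto. intros j Hj; auto. }
  rewrite (inner_ext D _ (fun i => Cmul c1 (v i)) _ (fun i => Cmul c2 (v i))) in H0 by auto.
  rewrite inner_scale, inner_self in H0.
  assert (c1 = Czero).
  { apply (Cmul_eq0 c1 (Cmul (Cconj c2) (RtoC (vnorm2 D v)))). rewrite <- H0; ring.
    intros H3. apply Cmul_eq0 in H3. apply Cconj_eq0 in H3. auto.
    intros H4. injection H4; lra. }
  apply Hf0. rewrite Hfin, Hc1 by auto. subst; ring.
Qed.
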